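(* Let $\pi\in S_n$ and $e=\Theta(\pi)$. Then: (a) $\pi$ avoids the vincular pattern $3\underline{214}$ if and only if $e$ avoids the consecutive pattern $120$; (b) $\pi$ avoids the vincular pattern $2\underline{413}$ if and only if $e$ avoids the consecutive pattern $021$. In particular $|\mathbf{I}_n(120)|=|S_n(3\underline{214})|$ and $|\mathbf{I}_n(021)|=|S_n(2\underline{413})|$ for all $n$.
   Context: $S_n$ is the set of permutations of $[n]$, and $\mathbf{I}_n$ the set of integer sequences $e_1\dots e_n$ with $0\le e_i<i$. $\Theta:S_n\to\mathbf{I}_n$ is the bijection $\pi\mapsto e$ with $e_i=|\{j: j<i,\ \pi_j>\pi_i\}|$. $\pi$ contains $3\underline{214}$ if there exist $j<i$ with $\pi_{i+1}<\pi_i<\pi_j<\pi_{i+2}$; $\pi$ contains $2\underline{413}$ if there exist $j<i$ with $\pi_{i+1}<\pi_j<\pi_{i+2}<\pi_i$; avoiding means not containing, and $S_n(\sigma)$ is the set of permutations avoiding $\sigma$. $e$ avoids the consecutive pattern $120$ if there is no $i$ with $e_{i+2}<e_i<e_{i+1}$, and avoids $021$ if there is no $i$ with $e_i<e_{i+2}<e_{i+1}$; $\mathbf{I}_n(p)$ is the set of $e\in\mathbf{I}_n$ avoiding $p$. *)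

(* Defs.v *)
(* Indices are 0-based: position k here is position k+1 in the paper,
   and values of a permutation in 'S_n are 0..n-1 (order-isomorphic to [n]). *)
From mathcomp Require Import all_boot all_fingroup.
Set Implicit Arguments. Unset Strict Implicit. Unset Printing Implicit Defensive.

Definition Theta n (p : 'S_n) (i : 'I_n) : nat :=
  #|[set j : 'I_n | (j < i) && (p i < p j)]|.

(* I_n : integer sequences e_1..e_n with 0 <= e_i < i (1-based), i.e. e_k <= k 0-based;
   entries are then < n so we store them in 'I_n. *)
Definition invseqs n : {set {ffun 'I_n -> 'I_n}} :=
  [set e : {ffun 'I_n -> 'I_n} | [forall i : 'I_n, (e i <= i)%N]].

Definition contains_3_214 n (p : 'S_n) : bool :=
  [exists j : 'I_n, exists i : 'I_n, exists i1 : 'I_n, exists i2 : 'I_n,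
    [&& (j < i)%N, val i1 == i.+1, val i2 == i.+2,
        (p i1 < p i)%N, (p i < p j)%N & (p j < p i2)%N]].

Definition contains_2_413 n (p : 'S_n) : bool :=
  [exists j : 'I_n, exists i : 'I_n, exists i1 : 'I_n, exists i2 : 'I_n,
    [&& (j < i)%N, val i1 == i.+1, val i2 == i.+2,
        (p i1 < p j)%N, (p j < p i2)%N & (p i2 < p i)%N]].

Definition contains_120 n (e : 'I_n -> nat) : bool :=
  [exists i : 'I_n, exists i1 : 'I_n, exists i2 : 'I_n,
    [&& val i1 == i.+1, val i2 == i.+2, (e i2 < e i)%N & (e i < e i1)%N]].

Definition contains_021 n (e : 'I_n -> nat) : bool :=
  [exists i : 'I_n, exists i1 : 'I_n, exists i2 : 'I_n,
    [&& val i1 == i.+1, val i2 == i.+2, (e i < e i2)%N & (e i2 < e i1)%N]].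

(* Main.v *)
Require Import Defs.
From mathcomp Require Import all_boot all_fingroup.
From mathcomp Require Import zify.
Set Implicit Arguments. Unset Strict Implicit.

Section A.
Variables (n : nat) (p : 'S_n).
Definition A (v k : nat) := #|[set j : 'I_n | (j < k) && (v < p j)]|.

Lemma A_S (k0 : 'I_n) v : A v k0.+1 = A v k0 + (v < p k0).
Proof.
rewrite /A.
have -> : [set j : 'I_n | (j < k0.+1) && (v < p j)] =
  if v < p k0 then k0 |: [set j : 'I_n | (j < k0) && (v < p j)]
  else [set j : 'I_n | (j < k0) && (v < p j)].
  apply/setP => j; rewrite !inE ltnS leq_eqVlt.
  have [/val_inj ->|ne] := eqVneq (val j) (val k0).
    by rewrite ltnn /=; case: ifP => h; rewrite !inE ?eqxx ?ltnn ?h.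
  have ne' : (j == k0) = false by apply/negbTE; move: ne; apply: contra => /eqP ->.
  by case: ifP => h; rewrite !inE ?ne'.
case: ifP => h; last by rewrite addn0.
by rewrite cardsU1 inE ltnn /= addnC.
Qed.

Lemma A_mono a b k : a <= b -> A b k <= A a k.
Proof.
move=> ab; apply: subset_leq_card; apply/subsetP => j; rewrite !inE.
by case/andP => -> /= h; apply: leq_ltn_trans h.
Qed.

Lemma A_lt a b k : a < b -> (forall j : 'I_n, j < k -> p j != b :> nat) ->
  (A b k < A a k) = [exists j : 'I_n, [&& j < k, a < p j & p j < b]].
Proof.
move=> ab hb; rewrite /A.
have sub : [set j : 'I_n | (j < k) && (b < p j)] \subset [set j : 'I_n | (j < k) && (a < p j)].
  apply/subsetP => j; rewrite !inE; case/andP => -> /= h; apply: ltn_trans h.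
  exact: ab.
rewrite (ltn_leqif (subset_leqif_card sub)).
apply/idP/existsP.
  case/subsetPn => j; rewrite !inE => /andP [jk aj] /negP nb.
  exists j; rewrite jk aj /=; rewrite ltn_neqAle (hb _ jk) /=.
  by rewrite leqNgt; apply/negP => h; apply: nb; rewrite jk h.
case=> j /and3P [jk aj jb]; apply/subsetPn; exists j; rewrite !inE ?jk ?aj //.
by rewrite -leqNgt ltnW.
Qed.
End A.

Section Pt.
Variables (n : nat) (p : 'S_n) (i i1 i2 : 'I_n).
Hypotheses (h1 : nat_of_ord i1 = i.+1) (h2 : nat_of_ord i2 = i.+2).

Lemma pne (a b : 'I_n) : nat_of_ord a != nat_of_ord b -> (p a : nat) != p b.
Proof. by move=> ne; apply/eqP => /val_inj/perm_inj ab; rewrite ab eqxx in ne. Qed.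

Lemma T0 : Theta p i = A p (p i) i. Proof. by []. Qed.
Lemma T1 : Theta p i1 = A p (p i1) i + (p i1 < p i).
Proof. by rewrite /Theta -/(A p (p i1) i1) h1 A_S. Qed.
Lemma T2 : Theta p i2 = A p (p i2) i + (p i2 < p i) + (p i2 < p i1).
Proof. by rewrite /Theta -/(A p (p i2) i2) h2 -h1 A_S h1 A_S. Qed.

Lemma hinj : forall j : 'I_n, j < i -> p j != p i2 :> nat.
Proof. move=> j ji; apply: pne; rewrite h2; apply/eqP => e; rewrite e in ji; lia. Qed.

Lemma d01 : (p i : nat) != p i1. Proof. apply: pne; rewrite h1; lia. Qed.
Lemma d02 : (p i : nat) != p i2. Proof. apply: pne; rewrite h2; lia. Qed.
Lemma d12 : (p i1 : nat) != p i2. Proof. apply: pne; rewrite h1 h2; lia. Qed.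

Lemma pt120 : ((Theta p i2 < Theta p i) && (Theta p i < Theta p i1)) =
  [&& p i1 < p i, p i < p i2 & [exists j : 'I_n, [&& j < i, p i < p j & p j < p i2]]].
Proof.
rewrite T0 T1 T2.
have := d01; have := d02; have := d12.
set x := nat_of_ord (p i); set y := nat_of_ord (p i1); set z := nat_of_ord (p i2).
move=> n12 n02 n01.
case: (ltngtP y x) => [yx|xy|e]; last by rewrite e eqxx in n01.
- have m1 := A_mono p i (ltnW yx).
  case: (ltngtP x z) => [xz|zx|e]; last by rewrite e eqxx in n02.
  + have zy : (z < y) = false by apply/negbTE; rewrite -leqNgt; lia.
    have zx : (z < x) = false by apply/negbTE; rewrite -leqNgt; lia.
    rewrite ?zy ?zx !addn0 /= (A_lt xz hinj).
    have -> : A p x i < A p y i + 1 by lia.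
    by rewrite andbT.
  + have m2 := A_mono p i (ltnW zx).
    rewrite /=; apply/negbTE; rewrite negb_and; apply/orP; left; lia.
- have m1 := A_mono p i (ltnW xy).
  have hh : (y < x) = false by apply/negbTE; rewrite -leqNgt; lia.
  rewrite ?hh.
  rewrite /= ?andbF; apply/negbTE; rewrite negb_and; apply/orP; right; lia.
Qed.

Lemma pt021 : ((Theta p i < Theta p i2) && (Theta p i2 < Theta p i1)) =
  [&& p i2 < p i & [exists j : 'I_n, [&& j < i, p i1 < p j & p j < p i2]]].
Proof.
rewrite T0 T1 T2.
have := d01; have := d02; have := d12.
set x := nat_of_ord (p i); set y := nat_of_ord (p i1); set z := nat_of_ord (p i2).
move=> n12 n02 n01.
case: (ltngtP y z) => [yz|zy|e]; last by rewrite e eqxx in n12.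
- have m1 := A_mono p i (ltnW yz).
  have hh : (z < y) = false by apply/negbTE; rewrite -leqNgt; lia.
  rewrite ?hh.
  case: (ltngtP z x) => [zx|xz|e]; last by rewrite e eqxx in n02.
  + have yx : y < x by lia.
    have m2 := A_mono p i (ltnW zx).
    rewrite ?yx ?addn0 /= ltn_add2r (A_lt yz hinj).
    by have -> : A p x i < A p z i + 1 by lia.
  + have m2 := A_mono p i (ltnW xz).
    have hh2 : (z < x) = false by apply/negbTE; rewrite -leqNgt; lia.
  rewrite ?hh2.
    rewrite /= ?addn0; apply/negbTE; rewrite negb_and; apply/orP; left; lia.
- have m1 := A_mono p i (ltnW zy).
  have -> : [exists j : 'I_n, [&& j < i, y < p j & p j < z]] = false.
    apply/negbTE/existsP => -[j /and3P [_ a b]]; lia.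
  rewrite andbF; apply/negbTE; rewrite negb_and; apply/orP; right.
  case: (ltnP y x) => yx; case: (ltnP z x) => zx; rewrite /=; lia.
Qed.
End Pt.

Lemma c120 n (p : 'S_n) : contains_3_214 p = contains_120 (Theta p).
Proof.
apply/existsP/existsP.
- case=> j /existsP [i /existsP [i1 /existsP [i2 /and3P [ji e1 /and4P [e2 a b c]]]]].
  exists i; apply/existsP; exists i1; apply/existsP; exists i2.
  rewrite e1 e2 /= (pt120 p (eqP e1) (eqP e2)) a (ltn_trans b c) /=.
  by apply/existsP; exists j; rewrite ji b c.
- case=> i /existsP [i1 /existsP [i2 /and4P [e1 e2 a b]]].
  have := pt120 p (eqP e1) (eqP e2); rewrite a b /= => /esym/and3P [c d /existsP [j /and3P [ji f g]]].
  exists j; apply/existsP; exists i; apply/existsP; exists i1; apply/existsP; exists i2.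
  by rewrite ji e1 e2 c f g.
Qed.

Lemma c021 n (p : 'S_n) : contains_2_413 p = contains_021 (Theta p).
Proof.
apply/existsP/existsP.
- case=> j /existsP [i /existsP [i1 /existsP [i2 /and3P [ji e1 /and4P [e2 a b c]]]]].
  exists i; apply/existsP; exists i1; apply/existsP; exists i2.
  rewrite e1 e2 /= (pt021 p (eqP e1) (eqP e2)) c /=.
  by apply/existsP; exists j; rewrite ji a b.
- case=> i /existsP [i1 /existsP [i2 /and4P [e1 e2 a b]]].
  have := pt021 p (eqP e1) (eqP e2); rewrite a b /= => /esym/andP [c /existsP [j /and3P [ji f g]]].
  exists j; apply/existsP; exists i; apply/existsP; exists i1; apply/existsP; exists i2.
  by rewrite ji e1 e2 c f g.
Qed.

Lemma card_lt_ord n m : m <= n -> #|[set v : 'I_n | v < m]| = m.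
Proof.
elim: m => [|m IH] lt.
  by apply/eqP; rewrite cards_eq0; apply/eqP/setP => v; rewrite !inE.
have -> : [set v : 'I_n | v < m.+1] = Ordinal lt |: [set v : 'I_n | v < m].
  apply/setP => v; rewrite !inE ltnS leq_eqVlt -val_eqE //.
rewrite cardsU1 IH ?(ltnW lt) // inE /= ltnn.
by rewrite add1n.
Qed.

Lemma perm_rank n (p : 'S_n) (i : 'I_n) : nat_of_ord (p i) = #|[set j : 'I_n | p j < p i]|.
Proof.
have -> : [set j : 'I_n | p j < p i] = p @^-1: [set v : 'I_n | v < p i].
  by apply/setP => j; rewrite !inE.
rewrite card_preimset; last exact: perm_inj.
by rewrite card_lt_ord // ltnW.
Qed.

Lemma Theta_inj n (p q : 'S_n) : Theta p =1 Theta q -> p = q.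
Proof.
move=> hT.
have key : forall k (i j : 'I_n), i < k -> j < k -> (p j < p i) = (q j < q i).
  elim=> [|k IH] i j //.
  rewrite !ltnS => hi hj.
  have ci : (nat_of_ord i == k) || (i < k) by rewrite -leq_eqVlt.
  have cj : (nat_of_ord j == k) || (j < k) by rewrite -leq_eqVlt.
  move: ci cj.
  have main : forall (i j : 'I_n), nat_of_ord i = k -> j < k -> (p i < p j) = (q i < q j).
    move=> i0 j0 ik jk.
    set Sp := [set j : 'I_n | (j < i0) && (p i0 < p j)].
    set Sq := [set j : 'I_n | (j < i0) && (q i0 < q j)].
    have cS : #|Sp| = #|Sq| by exact: hT.
    have nsub : forall a b : 'I_n, a \in Sp -> a \notin Sq -> b \in Sq -> b \in Sp.
      move=> a b; rewrite !inE => /andP [ai pa] /nandP naq /andP [bi qb].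
      rewrite bi /=; apply/negPn/negP => pb.
      have ai' : a < k by rewrite -ik.
      have bi' : b < k by rewrite -ik.
      have na : (q i0 : nat) != q a.
        by apply: pne; rewrite ik; apply/eqP => e; move: ai'; rewrite e ltnn.
      have nb : (p i0 : nat) != p b.
        by apply: pne; rewrite ik; apply/eqP => e; move: bi'; rewrite e ltnn.
      have e := IH a b ai' bi'.
      case: naq => [|naq]; first by rewrite ai.
      have pba : p b < p a.
        have h : p b < p i0 by rewrite ltn_neqAle eq_sym nb leqNgt.
        exact: ltn_trans h pa.
      rewrite e in pba.
      move: naq; rewrite -leqNgt leq_eqVlt eq_sym (negbTE na) /= => qa.
      by move: (ltn_trans qb (ltn_trans pba qa)); rewrite ltnn.
    have eqS : Sp = Sq.
      case: (boolP (Sp \subset Sq)) => [sub|/subsetPn [a ap aq]].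
        by apply/eqP; rewrite eqEcard sub cS leqnn.
      have sub : Sq \subset Sp by apply/subsetP => b bq; exact: nsub a b ap aq bq.
      by apply/esym/eqP; rewrite eqEcard sub cS leqnn.
    have : (j0 \in Sp) = (j0 \in Sq) by rewrite eqS.
    by rewrite !inE ik jk.
  have ne : forall (r : 'S_n) (a b : 'I_n), nat_of_ord a != nat_of_ord b -> (r a < r b) = ~~ (r b < r a).
    by move=> r a b ab; rewrite -leqNgt ltn_neqAle (pne r ab).
  case/orP => [/eqP ik|ik]; case/orP => [/eqP jk|jk].
  - have -> : i = j by apply: val_inj; rewrite /= ik jk.
    by rewrite !ltnn.
  - have jik : nat_of_ord j != nat_of_ord i by rewrite ik; apply/eqP => e; move: jk; rewrite e ltnn.
    by rewrite (ne p _ _ jik) (ne q _ _ jik) main.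
  - by rewrite main.
  - exact: IH.
apply/permP => i; apply: val_inj => /=.
rewrite (perm_rank p i) (perm_rank q i); apply: eq_card => j; rewrite !inE.
by apply: (key n).
Qed.

Lemma card_invseqs n : #|invseqs n| = n`!.
Proof.
rewrite /invseqs cardsE.
have -> : #|[pred e : {ffun 'I_n -> 'I_n} | [forall i : 'I_n, (e i <= i)%N]]| = #|family (fun i : 'I_n => [pred v : 'I_n | v <= i])|.
  by apply: eq_card => e; rewrite !inE.
rewrite card_family foldrE big_map big_enum /=.
have -> : \prod_(i in 'I_n) #|(fun x : 'I_n => x <= i)| = \prod_(i < n) i.+1.
  apply: eq_bigr => i _.
  have h := card_lt_ord (ltn_ord i).
  rewrite -[in RHS]h; apply: eq_card => v.
  by rewrite !inE ltnS.
elim: n => [|n IH]; first by rewrite big_ord0.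
by rewrite big_ord_recr /= IH factS mulnC.
Qed.

Lemma Theta_lt n (p : 'S_n) (i : 'I_n) : Theta p i < n.
Proof.
apply: (leq_ltn_trans _ (ltn_ord i)).
rewrite -[X in _ <= X](card_lt_ord (ltnW (ltn_ord i))).
apply: subset_leq_card; apply/subsetP => j; rewrite !inE; by case/andP.
Qed.

Definition TF n (p : 'S_n) : {ffun 'I_n -> 'I_n} := [ffun i => Ordinal (Theta_lt p i)].

Lemma TF_inj n : injective (@TF n).
Proof.
move=> p q e; apply: Theta_inj => i.
by have := congr1 (fun f : {ffun 'I_n -> 'I_n} => nat_of_ord (f i)) e; rewrite /= !ffunE.
Qed.

Lemma TF_img n : invseqs n = [set TF p | p in [set: 'S_n]].
Proof.
apply/esym/eqP; rewrite eqEcard card_imset; last exact: TF_inj.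
rewrite cardsT card_Sn card_invseqs leqnn andbT.
apply/subsetP => e /imsetP [p _ ->]; rewrite inE; apply/forallP => i.
rewrite ffunE /=.
rewrite -[X in _ <= X](card_lt_ord (ltnW (ltn_ord i))).
apply: subset_leq_card; apply/subsetP => j; rewrite !inE; by case/andP.
Qed.

Lemma c120_ext n (e1 e2 : 'I_n -> nat) : e1 =1 e2 -> contains_120 e1 = contains_120 e2.
Proof.
move=> h; apply: eq_existsb => i; apply: eq_existsb => i1; apply: eq_existsb => i2.
by rewrite !h.
Qed.

Lemma c021_ext n (e1 e2 : 'I_n -> nat) : e1 =1 e2 -> contains_021 e1 = contains_021 e2.
Proof.
move=> h; apply: eq_existsb => i; apply: eq_existsb => i1; apply: eq_existsb => i2.
by rewrite !h.
Qed.

Lemma TF_val n (p : 'S_n) : (fun i => nat_of_ord (TF p i)) =1 Theta p.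
Proof. by move=> i; rewrite ffunE. Qed.

Lemma card_pull n (P : {ffun 'I_n -> 'I_n} -> bool) :
  #|[set e in invseqs n | P e]| = #|[set p : 'S_n | P (TF p)]|.
Proof.
rewrite -(card_imset _ (@TF_inj n)); apply: eq_card => e.
rewrite TF_img inE; apply/andP/imsetP.
  case=> /imsetP [p _ ->] hp; exists p => //; by rewrite inE.
by case=> p; rewrite inE => hp ->; split => //; apply: imset_f.
Qed.

Theorem mainTheorem19 :
  (forall (n : nat) (p : 'S_n),
      (~~ contains_3_214 p <-> ~~ contains_120 (Theta p)) /\
      (~~ contains_2_413 p <-> ~~ contains_021 (Theta p))) /\
  (forall n : nat,
      #|[set e in invseqs n | ~~ contains_120 (fun i => val (e i))]| =
        #|[set p : 'S_n | ~~ contains_3_214 p]| /\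
      #|[set e in invseqs n | ~~ contains_021 (fun i => val (e i))]| =
        #|[set p : 'S_n | ~~ contains_2_413 p]|).
Proof.
split.
  by move=> n p; rewrite c120 c021.
move=> n; rewrite !card_pull; split; apply: eq_card => p; rewrite !inE.
  by rewrite c120 (c120_ext (TF_val p)).
by rewrite c021 (c021_ext (TF_val p)).
Qed.
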